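(* Let $V$ and $W$ be Banach spaces, let $\mathcal A\subset\mathcal L(V,W)$ be bounded and let $T\in\mathcal L(W,V)$ be compact. Set $\mathcal B:=\{I+T\circ A: A\in\mathcal A\}$. Assume that each $B\in\mathcal B$ is an isomorphism of $V$ and that $\mathcal A$ is sequentially compact in the weak operator topology of $\mathcal L(V,W)$. Then $\sup_{B\in\mathcal B}\|B^{-1}\|_{\mathcal L(V)}<+\infty$. In particular, there exists $\kappa>0$ such that $\inf_{B\in\mathcal B}\mathfrak C(B)\ge\kappa$.
   Context: The weak operator topology on $\mathcal L(V,W)$ is the coarsest topology making all maps $A\mapsto\langle h,Av\rangle_{W',W}$ ($v\in V$, $h\in W'$) continuous; sequential compactness of $\mathcal A$ means every sequence in $\mathcal A$ has a subsequence $A_n$ and some $A\in\mathcal A$ with $\langle h,A_nv\rangle\to\langle h,Av\rangle$ for all $v\in V,h\in W'$. For $B\in\mathcal L(V)$, the Banach constant $\mathfrak C(B)$ is the supremum of all $\kappa>0$ with $B_V(0,\kappa)\subset B(B_V(0,1))$ (closed balls) if $B$ is surjective, and $0$ otherwise. *)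

(* Defs.v *)
From HB Require Import structures.
From mathcomp Require Import all_boot all_order all_algebra.
From mathcomp Require Import all_classical all_reals all_analysis.
Set Implicit Arguments. Unset Strict Implicit. Unset Printing Implicit Defensive.
Import Order.TTheory GRing.Theory Num.Theory.
Import numFieldNormedType.Exports.
Local Open Scope classical_set_scope.
Local Open Scope ring_scope.

Section Defs.
Context {R : realType}.

Definition bounded_op {V W : normedModType R} (f : V -> W) : Prop :=
  linear f /\ continuous f.

Definition cball0 {V : normedModType R} (r : R) : set V := [set v | `|v| <= r].

Definition opnorm {V W : normedModType R} (f : V -> W) : \bar R :=
  ereal_sup [set (`|f v|)%:E | v in cball0 1].

Definition compact_op {V W : normedModType R} (T : V -> W) : Prop :=
  bounded_op T /\ compact (closure (T @` cball0 1)).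

Definition iso_inverse {V : normedModType R} (B Binv : V -> V) : Prop :=
  bounded_op Binv /\ (forall v, Binv (B v) = v) /\ (forall v, B (Binv v) = v).

Definition is_iso {V : normedModType R} (B : V -> V) : Prop :=
  bounded_op B /\ exists Binv, iso_inverse B Binv.

Definition dual_elt {W : normedModType R} (h : W -> R^o) : Prop :=
  linear h /\ continuous h.

Definition wot_seq_compact {V W : normedModType R} (A : set (V -> W)) : Prop :=
  forall a : nat -> (V -> W), (forall n, A (a n)) ->
    exists (phi : nat -> nat) (L : V -> W),
      {homo phi : m n / (m < n)%N >-> (m < n)%N} /\ A L /\
      forall (v : V) (h : W -> R^o), dual_elt h ->
        (fun n => h (a (phi n) v)) @ \oo --> h (L v).

Definition banach_const {V : normedModType R} (B : V -> V) : \bar R :=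
  if `[< forall w : V, exists v, B v = w >] then
    ereal_sup [set k%:E | k in [set k : R | 0 < k /\ cball0 k `<=` B @` cball0 1]]
  else 0%E.

End Defs.

(* Main.v *)
Require Import Defs.
From HB Require Import structures.
From mathcomp Require Import all_boot all_order all_algebra.
From mathcomp Require Import all_classical all_reals all_analysis.
Import Order.TTheory GRing.Theory Num.Theory.
Import numFieldNormedType.Exports.
From mathcomp Require Import ring lra.
Local Open Scope classical_set_scope.
Local Open Scope ring_scope.
Section Lin.
Context {R : realType} {V W : normedModType R} (f : V -> W) (lf : linear f).

Lemma linD x y : f (x + y) = f x + f y.
Proof. by have := lf 1 x y; rewrite !scale1r. Qed.

Lemma lin0 : f 0 = 0.
Proof.
have := linD 0 0; rewrite addr0 => /(congr1 (fun z => z - f 0)).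
by rewrite subrr addrK.
Qed.

Lemma linZ t x : f (t *: x) = t *: f x.
Proof. by have := lf t x 0; rewrite addr0 lin0 addr0. Qed.

Lemma linN x : f (- x) = - f x.
Proof. by rewrite -scaleN1r linZ scaleN1r. Qed.

Lemma linB x y : f (x - y) = f x - f y.
Proof. by rewrite linD linN. Qed.

Lemma lin_bound : continuous f -> exists2 C, 0 < C & forall x, `|f x| <= C * `|x|.
Proof.
move=> cf; have : f x @[x --> (0:V)] --> (0:W) by rewrite -lin0; exact: cf.
move=> /cvgr0_norm_lt /(_ 1 ltr01).
move=> /nbhs_norm0P [d /= d0 Hd].
exists (2 / d); first by rewrite divr_gt0.
move=> x; have [->|x0] := eqVneq x 0; first by rewrite lin0 !normr0 mulr0.
have nx : 0 < `|x| by rewrite normr_gt0.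
set k := d / 2 / `|x|.
have k0 : 0 < k by rewrite /k !divr_gt0.
have : `|f (k *: x)| < 1.
  apply: Hd => /=; rewrite normrZ gtr0_norm // /k divfK ?gt_eqF //.
  by rewrite ltr_pdivrMr // ltr_pMr // ltr1n.
rewrite linZ normrZ gtr0_norm // => H.
rewrite -(ler_pM2l k0) mulrA.
have -> : k * (2 / d) * `|x| = 1.
  rewrite /k; field; rewrite ?gt_eqF //.
exact: ltW.
Qed.
End Lin.
Section HB.
Context {R : realType} {V : normedModType R}.

Definition good (G : set (V * R)) :=
  [/\ G (0, 0),
   forall x a y b, G (x, a) -> G (y, b) -> G (x + y, a + b),
   forall t x a, G (x, a) -> G (t *: x, t * a),
   forall x a b, G (x, a) -> G (x, b) -> a = b &
   forall x a, G (x, a) -> a <= `|x| ].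

Definition ext (G : set (V * R)) (z : V) (c : R) : set (V * R) :=
  [set p | exists y a t, G (y, a) /\ p = (y + t *: z, a + t * c)].

Lemma good_ext G z : good G -> (forall a, ~ G (z, a)) ->
  exists c, good (ext G z c).
Proof.
move=> [G0 GD GZ GF GB] nz.
have key u a w b : G (u, a) -> G (w, b) -> a - `|u - z| <= `|w + z| - b.
  move=> Gu Gw; have := GB _ _ (GD _ _ _ _ Gu Gw).
  have -> : u + w = (u - z) + (w + z) by rewrite addrACA addNr addr0.
  move=> h; have := ler_normD (u - z) (w + z); lra.
pose S := [set r | exists y a, G (y, a) /\ r = a - `|y - z|].
have S0 : S !=set0 by exists (0 - `|0 - z|), 0, 0.
have Sub : ubound S (`|0 + z| - 0).
  by move=> r [y [a [Gy ->]]]; exact: key.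
have hs : has_sup S by split => //; exists (`|0 + z| - 0).
exists (sup S).
have cup w b : G (w, b) -> sup S <= `|w + z| - b.
  move=> Gw; apply: ge_sup => // r [y [a [Gy ->]]]; exact: key.
have clow u a : G (u, a) -> a - `|u - z| <= sup S.
  by move=> Gu; apply: sup_upper_bound => //; exists u, a.
set c := sup S.
split.
- exists 0, 0, 0; split => //; by rewrite scale0r mul0r !addr0.
- move=> x a y b [y1 [a1 [t1 [G1 [-> ->]]]]] [y2 [a2 [t2 [G2 [-> ->]]]]].
  exists (y1 + y2), (a1 + a2), (t1 + t2); split; first exact: GD.
  congr pair; last by ring.
  by rewrite scalerDl addrACA.
- move=> s x a [y1 [a1 [t1 [G1 [-> ->]]]]].
  exists (s *: y1), (s * a1), (s * t1); split; first exact: GZ.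
  congr pair; last by ring.
  by rewrite scalerDr scalerA.
- move=> x a b [y1 [a1 [t1 [G1 [e1 ->]]]]] [y2 [a2 [t2 [G2 [e2 ->]]]]].
  have e : y1 + t1 *: z = y2 + t2 *: z by rewrite -e1 -e2.
  have [tt|tt] := eqVneq t1 t2.
    subst t2; have ey : y1 = y2 by apply: (addIr (t1 *: z)).
    subst y2; by rewrite (GF _ _ _ G1 G2).
  exfalso.
  have ez1 : t1 *: z = y2 + t2 *: z - y1 by rewrite -e addrC addKr.
  have ez2 : (t1 - t2) *: z = y2 - y1 by rewrite scalerBl ez1 addrAC addrK.
  have ez : z = (t1 - t2)^-1 *: (y2 - y1).
    by rewrite -ez2 scalerA mulVf ?subr_eq0 // scale1r.
  apply: (nz ((t1 - t2)^-1 * (a2 - a1))); rewrite ez.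
  apply: (GZ _ _ _ _); apply: (GD _ _ _ _ _ _) => //.
  have := GZ (-1) _ _ G1; rewrite scaleN1r mulN1r; exact.
- move=> x a [y [a1 [t [Gy [-> ->]]]]].
  have [t0|t0|->] := ltgtP t 0; last first.
  + by rewrite scale0r mul0r !addr0; exact: GB.
  + have Gt := GZ t^-1 _ _ Gy.
    have hc := cup _ _ Gt.
    have -> : y + t *: z = t *: (t^-1 *: y + z).
      by rewrite scalerDr scalerA mulfV ?gt_eqF // scale1r.
    rewrite normrZ gtr0_norm //.
    set N := `|t^-1 *: y + z| in hc *.
    have h1 : t * c <= t * (N - t^-1 * a1) by rewrite ler_wpM2l // ltW.
    have e3 : t * (N - t^-1 * a1) = t * N - a1 by field; rewrite gt_eqF.
    rewrite e3 in h1.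
    lra.
  + have tp : 0 < - t by rewrite oppr_gt0.
    have Gt := GZ (- t)^-1 _ _ Gy.
    have hc := clow _ _ Gt.
    have -> : y + t *: z = (- t) *: ((- t)^-1 *: y - z).
      by rewrite scalerDr scalerA mulfV ?gt_eqF // scale1r scalerN scaleNr opprK.
    rewrite normrZ gtr0_norm //.
    set N := `|(- t)^-1 *: y - z| in hc *.
    have h1 : (- t) * ((- t)^-1 * a1 - N) <= (- t) * c by rewrite ler_wpM2l // ltW.
    have e3 : (- t) * ((- t)^-1 * a1 - N) = a1 + t * N by field; rewrite ?oppr_eq0 lt_eqF.
    rewrite e3 in h1.
    lra.
Qed.
End HB.
Lemma zorn_base T (P : set (set T)) (G0 : set T) : P G0 -> G0 !=set0 ->
  (forall F, F `<=` P -> F !=set0 -> total_on F subset -> P (\bigcup_(X in F) X)) ->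
  exists A, P A /\ forall B, A `<` B -> ~ P B.
Proof.
move=> PG0 G0n0 hch.
have := @Zorn_bigcup T (fun X => P X \/ X = set0).
case=> [F FP Ftot|A [[PA|A0] Amax]]; last 2 first.
- by exists A; split => // B AB PB; apply: (Amax B AB); left.
- exfalso; apply: (Amax G0); last by left.
  rewrite A0; split; first exact: sub0set.
  by case: G0n0 => p Gp /(_ p Gp).
have [[X FX [p Xp]]|nF] := pselect (exists2 X, F X & X !=set0); last first.
  right; apply/seteqP; split => // p [X FX Xp]; apply: nF; exists X => //.
  by exists p.
left.
have -> : \bigcup_(X in F) X = \bigcup_(X in [set X | F X /\ P X]) X.
  apply/seteqP; split => q [Y FY Yq].
  - exists Y => //; split => //; case: (FP _ FY) => // Y0.
    by rewrite Y0 in Yq.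
  - by exists Y => //; case: FY.
apply: hch.
- by move=> Y [].
- exists X; split => //; case: (FP _ FX) => // X0.
  by rewrite X0 in Xp.
- by move=> Y Z [FY _] [FZ _]; apply: Ftot.
Qed.

Section HB2.
Context {R : realType} {V : normedModType R}.

Lemma hahn_sep (x0 : V) : x0 != 0 -> exists g : V -> R^o, dual_elt g /\ g x0 != 0.
Proof.
move=> x0n0.
pose P (G : set (V * R)) := good G /\ G (x0, `|x0|).
pose G0 : set (V * R) := [set p | exists t, p = (t *: x0, t * `|x0|)].
have PG0 : P G0.
  split; last by exists 1; rewrite scale1r mul1r.
  split.
  - by exists 0; rewrite scale0r mul0r.
  - move=> x a y b [t [-> ->]] [s [-> ->]]; exists (t + s).
    by rewrite scalerDl mulrDl.
  - move=> s x a [t [-> ->]]; exists (s * t).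
    by rewrite scalerA mulrA.
  - move=> x a b [t [-> ->]] [s [e ->]].
    have : (t - s) *: x0 = 0 by rewrite scalerBl e subrr.
    move/eqP; rewrite scaler_eq0 (negbTE x0n0) orbF subr_eq0 => /eqP -> //.
  - move=> x a [t [-> ->]]; rewrite normrZ ler_wpM2r //.
    exact: ler_norm.
have [A [[[GA0 GAD GAZ GAF GAB] Ax0] Amax]] : exists A, P A /\ forall B, A `<` B -> ~ P B.
  apply: (@zorn_base _ P G0 PG0); first by exists (0, 0); exists 0; rewrite scale0r mul0r.
  move=> F FP [X FX] Ftot.
  have two p q Y Z : F Y -> F Z -> Y p -> Z q -> exists2 U, F U & U p /\ U q.
    move=> FY FZ Yp Zq; have [YZ|ZY] := Ftot _ _ FY FZ.
    - by exists Z => //; split => //; exact: YZ.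
    - by exists Y => //; split => //; exact: ZY.
  split; last by exists X => //; case: (FP _ FX).
  split.
  - by exists X => //; case: (FP _ FX) => [[]].
  - move=> x a y b [Y FY Yp] [Z FZ Zq].
    have [U FU [Up Uq]] := two _ _ _ _ FY FZ Yp Zq.
    by exists U => //; case: (FP _ FU) => [[_ hD _ _ _] _]; exact: hD.
  - move=> t x a [Y FY Yp]; exists Y => //.
    by case: (FP _ FY) => [[_ _ hZ _ _] _]; exact: hZ.
  - move=> x a b [Y FY Yp] [Z FZ Zq].
    have [U FU [Up Uq]] := two _ _ _ _ FY FZ Yp Zq.
    by case: (FP _ FU) => [[_ _ _ hF _] _]; exact: hF Up Uq.
  - move=> x a [Y FY Yp].
    by case: (FP _ FY) => [[_ _ _ _ hB] _]; exact: hB Yp.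
have tot z : exists a, A (z, a).
  have [//|nz] := pselect (exists a, A (z, a)).
  have nz' a : ~ A (z, a) by move=> h; apply: nz; exists a.
  have [c gc] := good_ext _ _ (And5 GA0 GAD GAZ GAF GAB) nz'.
  exfalso.
  have sub : A `<=` ext A z c.
    by move=> [y a] Aya; exists y, a, 0; rewrite scale0r mul0r !addr0.
  apply: (Amax (ext A z c)); last by split => //; exact: sub.
  split => // /(_ (z, c)) h; apply: (nz' c); apply: h.
  by exists 0, 0, 1; rewrite scale1r mul1r !add0r.
pose g (x : V) : R^o := sval (cid (tot x)).
have Hg x : A (x, g x) by rewrite /g; case: cid.
have lg : linear g.
  move=> t u v; apply: GAF (Hg _) _.
  exact: GAD (GAZ _ _ _ (Hg u)) (Hg v).
have gb w : `|g w| <= `|w|.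
  rewrite ler_norml GAB ?andbT //.
  rewrite lerNl -(linN _ lg) -normrN; exact: GAB.
exists g; split.
- split => // x; apply/cvgrPdist_lt => e e0.
  apply/nbhs_normP; exists e => //= y /= hy.
  by rewrite -(linB _ lg); exact: le_lt_trans (gb _) hy.
- have := GAF _ _ _ (Hg x0) Ax0 => ->.
  by rewrite normr_eq0.
Qed.
End HB2.
Section Aux.
Context {R : realType} {V W : normedModType R}.

Lemma opnorm_ub (f : V -> W) M v : (opnorm f <= M%:E)%E -> `|v| <= 1 -> `|f v| <= M.
Proof.
move=> hM v1; rewrite -lee_fin; apply: le_trans hM.
by apply: ereal_sup_ubound; exists v.
Qed.

Lemma opnorm_scale (f : V -> W) M : linear f -> (opnorm f <= M%:E)%E ->
  forall x, `|f x| <= M * `|x|.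
Proof.
move=> lf hM x; have [->|x0] := eqVneq x 0.
  by rewrite (lin0 _ lf) !normr0 mulr0.
have nx : 0 < `|x| by rewrite normr_gt0.
have := @opnorm_ub f M (`|x|^-1 *: x) hM.
rewrite (linZ _ lf) !normrZ gtr0_norm ?invr_gt0 // mulVf ?gt_eqF // => /(_ (lexx _)).
by rewrite -ler_pdivlMl ?invr_gt0 // invrK mulrC.
Qed.

Lemma opnorm_le (f : V -> W) M : (forall v, `|v| <= 1 -> `|f v| <= M) ->
  (opnorm f <= M%:E)%E.
Proof.
by move=> h; apply: ub_ereal_sup => _ [v v1 <-]; rewrite lee_fin; exact: h.
Qed.
End Aux.

Lemma phi_ge (phi : nat -> nat) : {homo phi : m n / (m < n)%N >-> (m < n)%N} ->
  forall n, (n <= phi n)%N.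
Proof.
move=> h; elim=> [|n IH] //; apply: leq_ltn_trans IH _; exact: h.
Qed.

Lemma inv_small {R : realType} (e : R) : 0 < e ->
  exists N, forall n, (N <= n)%N -> n.+1%:R^-1 <= e.
Proof.
move=> e0; exists (Num.Def.trunc (e^-1)) => n Nn.
have h := truncnS_gt (e^-1).
have h2 : (Num.Def.trunc e^-1).+1%:R <= n.+1%:R :> R by rewrite ler_nat ltnS.
rewrite -(ler_pV2 (x := e)) ?invrK ?inE ?unitfE ?invr_gt0 ?ltr0n ?e0 ?gt_eqF //.
  by apply/ltW; exact: lt_le_trans h h2.
Qed.

Lemma nat_near (P : nat -> Prop) : (\forall n \near \oo, P n) ->
  exists N, forall n, (N <= n)%N -> P n.
Proof. by move=> [N _ HN]; exists N => n Nn; apply: HN. Qed.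
Section Core.
Context {R : realType} {V W : normedModType R}.

Lemma seq_contra (A : set (V -> W)) (T : W -> V) MA
  (a_ : nat -> V -> W) (v_ : nat -> V) :
  (forall a, A a -> bounded_op a) -> (forall a, A a -> (opnorm a <= MA%:E)%E) ->
  compact_op T -> (forall a, A a -> is_iso (fun v => v + T (a v))) ->
  wot_seq_compact A ->
  (forall n, A (a_ n)) -> (forall n, `|v_ n| = 1) ->
  (forall n, `|v_ n + T (a_ n (v_ n))| <= n.+1%:R^-1) -> False.
Proof.
move=> bA nA [[lT cT] compT] isoA wotc Aa v1 vsmall.
have [phi [L [phih [AL wot]]]] := wotc a_ Aa.
pose c := Num.max MA 1.
have c0 : 0 < c by rewrite lt_max ltr01 orbT.
have abnd n x : `|a_ n x| <= c * `|x|.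
  apply: opnorm_scale; first by case: (bA _ (Aa n)).
  by apply: le_trans (nA _ (Aa n)) _; rewrite lee_fin le_max lexx.
have [CT CT0 Tb] := lin_bound _ lT cT.
pose zz n := T (c^-1 *: a_ (phi n) (v_ (phi n))).
have zzS n : closure (T @` cball0 1) (zz n).
  apply: subset_closure; exists (c^-1 *: a_ (phi n) (v_ (phi n))) => //.
  rewrite /cball0 /= normrZ gtr0_norm ?invr_gt0 // ler_pdivrMl // mulr1.
  by have := abnd (phi n) (v_ (phi n)); rewrite v1 mulr1.
have [y [_ ycl]] : closure (T @` cball0 1) `&` cluster (zz @ \oo) !=set0.
  by apply: compT; exists 0%N => // n _; exact: zzS.
have near_y d N : 0 < d -> exists2 n, (N <= n)%N & `|y - zz n| < d.
  move=> d0.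
  have := ycl [set zz n | n in [set n | (N <= n)%N]] (ball y d) _ (nbhsx_ballx y d d0).
  case.
    by exists N => // n /= Nn; exists n.
  move=> _ [[n Nn <-] hb]; exists n => //.
  by move: hb; rewrite -ball_normE.
have phige := @phi_ge phi phih.
pose v := - (c *: y).
have key n : T (a_ (phi n) (v_ (phi n))) = c *: zz n.
  by rewrite /zz (linZ _ lT) scalerA mulfV ?gt_eqF // scale1r.
have approx e N : 0 < e -> exists n,
    [/\ (N <= n)%N, `|v_ (phi n) - v| <= e & `|T (a_ (phi n) v) + v| <= e].
  move=> e0.
  have K0 : 0 <= CT * c by rewrite mulr_ge0 // ltW.
  pose eta := e / (2 * (CT * c + 1)).
  have eta0 : 0 < eta by rewrite divr_gt0 // mulr_gt0 // ltr_pwDr.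
  have he : eta * (2 * (CT * c + 1)) = e.
    by rewrite /eta divfK // mulf_neq0 // gt_eqF // ltr_pwDr.
  have [N0 HN0] := inv_small _ eta0.
  have [n Nn hn] := near_y (eta / c) (maxn N N0) (divr_gt0 eta0 c0).
  rewrite geq_max in Nn; case/andP: Nn => Nn N0n.
  exists n.
  have m1 : `|T (a_ (phi n) (v_ (phi n))) + v| <= eta.
    rewrite key /v -scalerBr normrZ gtr0_norm // distrC.
    have : c * `|y - zz n| < c * (eta / c) by rewrite ltr_pM2l.
    by rewrite mulrCA mulfV ?gt_eqF // mulr1 => /ltW.
  have m0 : `|v_ (phi n) + T (a_ (phi n) (v_ (phi n)))| <= eta.
    apply: le_trans (vsmall _) (HN0 _ _); exact: leq_trans N0n (phige n).
  have m2 : `|v_ (phi n) - v| <= 2 * eta.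
    have -> : v_ (phi n) - v = (v_ (phi n) + T (a_ (phi n) (v_ (phi n))))
        - (T (a_ (phi n) (v_ (phi n))) + v) by rewrite opprD addrA addrK.
    have := ler_normB (v_ (phi n) + T (a_ (phi n) (v_ (phi n))))
        (T (a_ (phi n) (v_ (phi n))) + v); lra.
  have la : linear (a_ (phi n)) by case: (bA _ (Aa (phi n))).
  have m3 : `|T (a_ (phi n) v) + v| <= (2 * (CT * c) + 1) * eta.
    have -> : T (a_ (phi n) v) + v = T (a_ (phi n) (v - v_ (phi n)))
        + (T (a_ (phi n) (v_ (phi n))) + v).
      by rewrite (linB _ la) (linB _ lT) addrA subrK.
    apply: le_trans (ler_normD _ _) _.
    have h1 := Tb (a_ (phi n) (v - v_ (phi n))).
    have h2 := abnd (phi n) (v - v_ (phi n)).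
    have h3 : CT * `|a_ (phi n) (v - v_ (phi n))| <= CT * (c * (2 * eta)).
      apply: ler_wpM2l; first exact: ltW.
      apply: le_trans h2 _; rewrite distrC.
      by apply: ler_wpM2l; first exact: ltW.
    have : CT * (c * (2 * eta)) = 2 * (CT * c) * eta by ring.
    lra.
  split => //.
  - apply: le_trans m2 _; nra.
  - apply: le_trans m3 _; nra.
have vn0 : v != 0.
  apply/negP => /eqP v0.
  have h2 : (0:R) < 2^-1 by rewrite invr_gt0 ltr0Sn.
  have [n [_ h _]] := approx (2^-1) 0%N h2.
  by move: h; rewrite v0 subr0 v1; lra.
have gzero g : dual_elt g -> g (v + T (L v)) = 0.
  move=> [lg cg]; have [Cg Cg0 gb] := lin_bound _ lg cg.
  have dh : dual_elt (g \o T).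
    split; first by move=> t x z /=; rewrite lT lg.
    by move=> x; apply: continuous_comp; [exact: cT | exact: cg].
  have cv := wot v _ dh.
  apply/eqP; rewrite -normr_le0; apply/ler_addgt0Pr => e e0; rewrite add0r.
  have e20 : 0 < e / 2 by rewrite divr_gt0.
  have [N HN] := nat_near _ (cvgr_dist_lt _ _ cv _ e20).
  have [n [Nn _ hn]] := approx (e / 2 / Cg) N (divr_gt0 e20 Cg0).
  have -> : g (v + T (L v)) = (g (T (L v)) - g (T (a_ (phi n) v)))
      + g (T (a_ (phi n) v) + v).
    by rewrite !(linD _ lg) addrA subrK addrC.
  apply: le_trans (ler_normD _ _) _.
  have h1 := HN n Nn; rewrite /= in h1.
  have h2 : `|g (T (a_ (phi n) v) + v)| <= e / 2.
    apply: le_trans (gb _) _.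
    have : Cg * `|T (a_ (phi n) v) + v| <= Cg * (e / 2 / Cg).
      by apply: ler_wpM2l; [exact: ltW | exact: hn].
    by rewrite mulrCA mulfV ?gt_eqF // mulr1.
  lra.
have vz : v + T (L v) = 0.
  apply/eqP; apply/negPn/negP => nz0.
  have [g [dg gn]] := hahn_sep _ nz0.
  by move: gn; rewrite gzero // eqxx.
have [_ [Binv [[lBi _] [BiB _]]]] := isoA _ AL.
apply: (negP vn0); rewrite -(BiB v) vz (lin0 _ lBi).
by [].
Qed.
End Core.
Theorem mainTheorem8 (R : realType) (V W : completeNormedModType R)
  (A : set (V -> W)) (T : W -> V) :
  (forall a, A a -> bounded_op a) ->
  (exists M : R, forall a, A a -> (opnorm a <= M%:E)%E) ->
  compact_op T ->
  (forall a, A a -> is_iso (fun v => v + T (a v))) ->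
  wot_seq_compact A ->
  (exists M : R, forall a, A a -> forall Binv : V -> V,
      iso_inverse (fun v => v + T (a v)) Binv -> (opnorm Binv <= M%:E)%E) /\
  (exists kappa : R, 0 < kappa /\
      (kappa%:E <= ereal_inf [set banach_const (fun v => (v + T (a v))%R) | a in A])%E).
Proof.
move=> hb [MA nA] hT hiso hwot.
have [[lT cT] _] := hT.
have part1 : exists M : R, forall a, A a -> forall Binv : V -> V,
    iso_inverse (fun v => v + T (a v)) Binv -> (opnorm Binv <= M%:E)%E.
  apply: contrapT => neg.
  have H n : exists p : (V -> W) * V,
      [/\ A p.1, `|p.2| = 1 & `|p.2 + T (p.1 p.2)| <= n.+1%:R^-1].
    apply: contrapT => hn; apply: neg; exists n.+1%:R => a Aa Binv hB.
    rewrite leNgt; apply/negP => /ereal_sup_gt [_ [u u1 <-]]; rewrite lte_fin => hu.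
    have [[lBi _] [BiB BBi]] := hB.
    have la : linear a by case: (hb _ Aa).
    set w := Binv u in hu.
    have nw : 0 < `|w| by apply: lt_trans hu; rewrite ltr0Sn.
    apply: hn; exists (a, `|w|^-1 *: w); split => //=.
    - by rewrite normrZ gtr0_norm ?invr_gt0 // mulVf ?gt_eqF.
    - rewrite (linZ _ la) (linZ _ lT) -scalerDr.
      have -> : w + T (a w) = u by exact: (BBi u).
      rewrite normrZ gtr0_norm ?invr_gt0 //.
      apply: le_trans (ler_wpM2l _ u1) _; first by rewrite invr_ge0 ltW.
      rewrite mulr1 lef_pV2 ?ltW //; by rewrite ?posrE ?ltr0Sn.
  have [p Hp] := choice H.
  apply: (@seq_contra R V W A T MA (fun n => (p n).1) (fun n => (p n).2)
    hb nA hT hiso hwot).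
  - by move=> n; case: (Hp n).
  - by move=> n; case: (Hp n).
  - by move=> n; case: (Hp n).
split => //.
have [M HM] := part1.
pose M' := Num.max M 1.
have M'0 : 0 < M' by rewrite lt_max ltr01 orbT.
exists M'^-1; split; first by rewrite invr_gt0.
apply/ereal_infP => _ [a Aa <-].
have [_ [Binv hB]] := hiso _ Aa.
have [[lBi _] [BiB BBi]] := hB.
rewrite /banach_const; case: asboolP => [_|nsurj]; last first.
  by exfalso; apply: nsurj => w; exists (Binv w); exact: BBi.
apply: ereal_sup_ge; exists M'^-1%:E => //.
exists M'^-1 => //; split; first by rewrite invr_gt0.
move=> w /= hw; exists (Binv w); last exact: BBi.
rewrite /cball0 /=.
have hB' : (opnorm Binv <= M'%:E)%E.
  by apply: le_trans (HM _ Aa _ hB) _; rewrite lee_fin le_max lexx.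
apply: le_trans (@opnorm_scale _ _ _ Binv M' lBi hB' w) _.
have M'n : M' != 0 by rewrite gt_eqF.
rewrite -(mulfV M'n); apply: ler_wpM2l => //; exact: ltW.
Qed.
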